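(* Let $\mathscr T$ be a functor satisfying (T1)–(T4). Then $\Gamma$, defined on objects by $\Gamma(\mathcal M)=\mathscr P(\mathscr T(\mathbf{Lin}(\mathcal M)))$ and on morphisms by $\Gamma(k)(A)=\{k\circ a\circ k^{-1}\mid a\in A\}$, is a functor from $\mathbb{COL}$ to $\mathscr T\mathbb{ODA}$.
   Context: An involutive unital quantale is $(Q,\bigsqcup,\odot,{}^*,e)$: complete join-semilattice $Q$, associative $\odot$ distributing over arbitrary joins in each argument, unit $e$, ${}^*$ with $x^{**}=x$, $(x\odot y)^*=y^*\odot x^*$, $(\bigsqcup x_i)^*=\bigsqcup x_i^*$. An involutive generalized dynamic algebra (IDA) is such a quantale with ${\sim}\colon K\to K$ satisfying, for all $x,y$ and families $(x_i)$: ${\sim}(x\odot{\sim}{\sim}y)={\sim}(x\odot y)$; ${\sim}(\bigsqcup{\sim}{\sim}x_i)={\sim}(\bigsqcup x_i)$; $({\sim}x)^*={\sim}x$; ${\sim}{\sim}({\sim}{\sim}x\odot y)={\sim}({\sim}x\sqcup{\sim}({\sim}x\sqcup y))$. Test set $\widetilde K=\{{\sim}k\}$; $\bigvee W={\sim}{\sim}\bigsqcup W$; $w^\perp={\sim}w$; $k\preceq l$ iff $\bigvee\{k,l\}=l$; $k\bullet v={\sim}{\sim}(k\odot v)$; $k\equiv l$ iff $k\bullet w=l\bullet w$ for all $w\in\widetilde K$. IDA morphisms preserve arbitrary joins, $\odot$, ${}^*$, unit, ${\sim}$ (category $\mathbb{IDA}$); semi-Foulis means $(\widetilde K,\preceq,{}^\perp)$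 is a complete orthomodular lattice. $\mathbb{IM}$: involutive monoids and homomorphisms. For a complete orthomodular lattice $\mathcal M$: $\pi_m(x)=m\wedge(m^\perp\vee x)$; $\mathbf{Lin}(\mathcal M)$ is the set of maps $f$ admitting $f^*$ with $f(x)\le y^\perp\iff x\le f^*(y)^\perp$, an IDA under pointwise joins, composition, ${}^*$, $\mathrm{id}$, ${\sim}f=\pi_{f(1)^\perp}$. For an involutive submonoid $L\supseteq\{\pi_m\}$, $\mathscr P(L)$ is the IDA of subsets of $L$ with union, $A\odot B=\{a\circ b\}$, $A^*=\{a^*\}$, unit $\{\mathrm{id}_M\}$, ${\sim}A=\{\pi_{(\bigvee_{a\in A}a(1))^\perp}\}$. $\mathscr T\colon\mathbb{IDA}\to\mathbb{IM}$ satisfies: (T1) $\widetilde K\subseteq\mathscr T(K)\subseteq K$, $\mathscr T(K)$ an involutive submonoid; (T2) for semi-Foulis $\mathfrak K$ with $s=t\iff s\equiv t$ on $\mathscr T(K)$, $k\mapsto k\bullet(-)$ is an isomorphism $\mathscr T(\mathfrak K)\to\mathscr T(\mathbf{Lin}(\widetilde{\mathfrak K}))$; (T3) $f\mapsto\{f\}$ is an isomorphism $\mathscr T(\mathbf{Lin}(\mathcal M))\to\mathscr T(\mathscr P(\mathscr T(\mathbf{Lin}(\mathcal M))))$; (T4) $\mathscr T(f)$ is the restriction of $f$. A $\mathscr T$-based orthomodular dynamic algebra is an IDA with: (TODA1) $(\widetilde K,\preceq,{}^\perp)$ a complete orthomodular lattice; (TODA2) every $A$ with $\mathscr T(K)\subseteq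 A\subseteq K$ closed under $\odot$, ${}^*$, arbitrary joins equals $K$; (TODA3) for $S,T\subseteq\mathscr T(K)$, $\bigsqcup S=\bigsqcup T$ iff $S=T$; (TODA4) for $s,t\in\mathscr T(K)$, $s=t$ iff $s\equiv t$. $\mathscr T\mathbb{ODA}$: these objects with bijective IDA morphisms. $\mathbb{COL}$: complete orthomodular lattices with ortholattice isomorphisms (bijections $g$ with $m\le n\iff g(m)\le g(n)$, $g(m^\perp)=g(m)^\perp$). *)

(* Defs.v *)
From Stdlib Require Import ClassicalEpsilon.

Set Implicit Arguments.
Unset Strict Implicit.

Definition img {A B : Type} (f : A -> B) (S : A -> Prop) : B -> Prop :=
  fun z => exists a, S a /\ z = f a.
Definition pair {A : Type} (x y : A) : A -> Prop := fun z => z = x \/ z = y.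
Definition is_lub {A : Type} (le : A -> A -> Prop) (W : A -> Prop) (s : A) : Prop :=
  (forall w, W w -> le w s) /\ (forall u, (forall w, W w -> le w u) -> le s u).

Record COLops := { ocar :> Type; ole : ocar -> ocar -> Prop;
                   osup : (ocar -> Prop) -> ocar; oc : ocar -> ocar }.
Arguments ole : clear implicits.
Arguments osup : clear implicits.
Arguments oc : clear implicits.

Section COLdefs.
Variable M : COLops.
Definition ojoin (a b : M) : M := osup M (pair a b).
Definition omeet (a b : M) : M := oc M (ojoin (oc M a) (oc M b)).
Definition otop : M := osup M (fun _ => True).
Definition sasaki (m x : M) : M := omeet m (ojoin (oc M m) x).

Definition is_COL : Prop :=
  (forall a, ole M a a) /\
  (forall a b, ole M a b -> ole M b a -> a = b) /\
  (forall a b c, ole M a b -> ole M b c -> ole M a c) /\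
  (forall W, is_lub (ole M) W (osup M W)) /\
  (forall a b, ole M a b -> ole M (oc M b) (oc M a)) /\
  (forall a, oc M (oc M a) = a) /\
  (forall a, ojoin a (oc M a) = otop) /\
  (forall a b, ole M a b -> b = ojoin a (omeet b (oc M a))).

Definition COL_iso (N : COLops) (g : M -> N) (g' : N -> M) : Prop :=
  (forall x, g' (g x) = x) /\ (forall y, g (g' y) = y) /\
  (forall m n, ole M m n <-> ole N (g m) (g n)) /\
  (forall m, g (oc M m) = oc N (g m)).
End COLdefs.

Record IDAops := { car :> Type; jn : (car -> Prop) -> car; mul : car -> car -> car;
                   st : car -> car; un : car; sim : car -> car }.
Arguments jn : clear implicits.
Arguments mul : clear implicits.
Arguments st : clear implicits.
Arguments un : clear implicits.
Arguments sim : clear implicits.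

Section IDAdefs.
Variable K : IDAops.
Definition qle (x y : K) : Prop := jn K (pair x y) = y.
Definition bjn (x y : K) : K := jn K (pair x y).

Definition is_IDA : Prop :=
  (forall a, qle a a) /\
  (forall a b, qle a b -> qle b a -> a = b) /\
  (forall a b c, qle a b -> qle b c -> qle a c) /\
  (forall A, is_lub qle A (jn K A)) /\
  (forall x y z, mul K x (mul K y z) = mul K (mul K x y) z) /\
  (forall x, mul K (un K) x = x) /\ (forall x, mul K x (un K) = x) /\
  (forall x A, mul K x (jn K A) = jn K (img (mul K x) A)) /\
  (forall x A, mul K (jn K A) x = jn K (img (fun a => mul K a x) A)) /\
  (forall x, st K (st K x) = x) /\
  (forall x y, st K (mul K x y) = mul K (st K y) (st K x)) /\
  (forall A, st K (jn K A) = jn K (img (st K) A)) /\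
  (forall x y, sim K (mul K x (sim K (sim K y))) = sim K (mul K x y)) /\
  (forall A, sim K (jn K (img (fun x => sim K (sim K x)) A)) = sim K (jn K A)) /\
  (forall x, st K (sim K x) = sim K x) /\
  (forall x y, sim K (sim K (mul K (sim K (sim K x)) y))
               = sim K (bjn (sim K x) (sim K (bjn (sim K x) y)))).

Definition TildeCar : Type := { k : K | exists l, k = sim K l }.
Definition tmk (l : K) : TildeCar := exist _ (sim K l) (ex_intro _ l eq_refl).
Definition t_le (k l : TildeCar) : Prop :=
  sim K (sim K (jn K (pair (proj1_sig k) (proj1_sig l)))) = proj1_sig l.
Definition t_oc (k : TildeCar) : TildeCar := tmk (proj1_sig k).
Definition t_sup (W : TildeCar -> Prop) : TildeCar :=
  epsilon (inhabits (tmk (un K))) (fun s => is_lub t_le W s).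
Definition tilde_ops : COLops := Build_COLops t_le t_sup t_oc.

Definition bullet (k : K) (w : TildeCar) : TildeCar := tmk (sim K (mul K k (proj1_sig w))).
Definition equivk (k l : K) : Prop :=
  forall w : TildeCar, proj1_sig (bullet k w) = proj1_sig (bullet l w).

Definition IDA_hom (L : IDAops) (f : K -> L) : Prop :=
  (forall A, f (jn K A) = jn L (img f A)) /\
  (forall x y, f (mul K x y) = mul L (f x) (f y)) /\
  (forall x, f (st K x) = st L (f x)) /\
  f (un K) = un L /\
  (forall x, f (sim K x) = sim L (f x)).

Definition IM_iso_on (L : IDAops) (S : K -> Prop) (S' : L -> Prop) (phi : K -> L) : Prop :=
  (forall x, S x -> S' (phi x)) /\
  (forall x y, S x -> S y -> phi x = phi y -> x = y) /\
  (forall y, S' y -> exists x, S x /\ phi x = y) /\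
  phi (un K) = un L /\
  (forall x y, S x -> S y -> phi (mul K x y) = mul L (phi x) (phi y)) /\
  (forall x, S x -> phi (st K x) = st L (phi x)).
End IDAdefs.

Section Lin.
Variable M : COLops.
Definition has_adjoint (f : M -> M) : Prop :=
  exists g : M -> M, forall x y, ole M (f x) (oc M y) <-> ole M x (oc M (g y)).
Definition LinCar : Type := { f : M -> M | has_adjoint f }.
Definition idL : LinCar :=
  exist _ (fun x => x) (ex_intro (fun g : M -> M => forall x y,
    ole M x (oc M y) <-> ole M x (oc M (g y))) (fun x => x) (fun x y => iff_refl _)).
(* [liftL h] is h as an element of Lin(M); when h is adjointable (always the case
   below for a genuine complete OML) its underlying map is exactly h. *)
Definition liftL (h : M -> M) : LinCar :=
  match excluded_middle_informative (has_adjoint h) with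
  | left p => exist _ h p
  | right _ => idL
  end.
Definition Lin_jn (F : LinCar -> Prop) : LinCar :=
  liftL (fun x => osup M (fun z => exists f, F f /\ z = proj1_sig f x)).
Definition Lin_mul (f g : LinCar) : LinCar :=
  liftL (fun x => proj1_sig f (proj1_sig g x)).
Definition Lin_st (f : LinCar) : LinCar :=
  liftL (proj1_sig (constructive_indefinite_description _ (proj2_sig f))).
Definition Lin_sim (f : LinCar) : LinCar :=
  liftL (sasaki (oc M (proj1_sig f (otop M)))).
Definition Lin : IDAops := Build_IDAops Lin_jn Lin_mul Lin_st idL Lin_sim.

Variable L : LinCar -> Prop.
Definition PCar : Type := { A : LinCar -> Prop | forall a, A a -> L a }.
Definition P_jn (AA : PCar -> Prop) : PCar :=
  exist (fun B : LinCar -> Prop => forall a, B a -> L a)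
    (fun c => exists A : PCar, AA A /\ proj1_sig A c)
    (fun c (H : exists A : PCar, AA A /\ proj1_sig A c) =>
       match H with ex_intro _ A (conj _ HA) => proj2_sig A c HA end).
Definition P_mk (Q : LinCar -> Prop) : PCar :=
  exist (fun B : LinCar -> Prop => forall a, B a -> L a)
    (fun c => L c /\ Q c) (fun c (H : L c /\ Q c) => proj1 H).
(* the intersections with L below are no-ops when L is an involutive submonoid
   containing all Sasaki projections, as in the paper *)
Definition P_mul (A B : PCar) : PCar :=
  P_mk (fun c => exists a b, proj1_sig A a /\ proj1_sig B b /\ c = Lin_mul a b).
Definition P_st (A : PCar) : PCar :=
  P_mk (fun c => exists a, proj1_sig A a /\ c = Lin_st a).
Definition P_un : PCar := P_mk (fun c => c = idL).
Definition P_sim (A : PCar) : PCar :=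
  P_mk (fun c => c = liftL (sasaki (oc M (osup M
          (fun z => exists a, proj1_sig A a /\ z = proj1_sig a (otop M)))))).
Definition Pset : IDAops := Build_IDAops P_jn P_mul P_st P_un P_sim.
End Lin.

Definition Tfun := forall K : IDAops, car K -> Prop.

Definition T_axioms (T : Tfun) : Prop :=
  (forall K, is_IDA K ->
     (forall k, T K (sim K k)) /\ T K (un K) /\
     (forall x y, T K x -> T K y -> T K (mul K x y)) /\
     (forall x, T K x -> T K (st K x))) /\
  (* functoriality, with (T4): T(f) is the restriction of f *)
  (forall (K L : IDAops) (f : K -> L), is_IDA K -> is_IDA L -> IDA_hom f ->
     forall x, T K x -> T L (f x)) /\
  (forall K, is_IDA K -> is_COL (tilde_ops K) ->
     (forall s t, T K s -> T K t -> (s = t <-> equivk s t)) ->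
     exists phi : K -> Lin (tilde_ops K),
       (forall k, T K k -> forall w, proj1_sig (phi k) w = bullet k w) /\
       IM_iso_on (T K) (T (Lin (tilde_ops K))) phi) /\
  (forall M, is_COL M ->
     exists psi : Lin M -> Pset (T (Lin M)),
       (forall f, T (Lin M) f -> proj1_sig (psi f) = (fun g => g = f)) /\
       IM_iso_on (T (Lin M)) (T (Pset (T (Lin M)))) psi).

Definition is_TODA (T : Tfun) (K : IDAops) : Prop :=
  is_IDA K /\
  is_COL (tilde_ops K) /\
  (forall A : K -> Prop, (forall x, T K x -> A x) ->
     (forall x y, A x -> A y -> A (mul K x y)) -> (forall x, A x -> A (st K x)) ->
     (forall S, (forall x, S x -> A x) -> A (jn K S)) -> forall x, A x) /\
  (forall S S' : K -> Prop, (forall x, S x -> T K x) -> (forall x, S' x -> T K x) ->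
     (jn K S = jn K S' <-> forall x, S x <-> S' x)) /\
  (forall s t, T K s -> T K t -> (s = t <-> equivk s t)).

Definition TODA_hom (K L : IDAops) (f : K -> L) : Prop :=
  IDA_hom f /\ (forall x y, f x = f y -> x = y) /\ (forall y, exists x, f x = y).

Definition Gamma (T : Tfun) (M : COLops) : IDAops := Pset (T (Lin M)).
Definition conjset (M N : COLops) (g : M -> N) (g' : N -> M)
  (A : LinCar M -> Prop) : LinCar N -> Prop :=
  fun c => exists a, A a /\ proj1_sig c = (fun x => g (proj1_sig a (g' x))).

(* Main.v *)
Require Import Defs.
From Stdlib Require Import ClassicalEpsilon FunctionalExtensionality PropExtensionality ProofIrrelevance.
Set Implicit Arguments.
Unset Strict Implicit.

Lemma pred_ext {A : Type} (P Q : A -> Prop) : (forall z, P z <-> Q z) -> P = Q.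
Proof. intros H; apply functional_extensionality; intros z; apply propositional_extensionality; auto. Qed.

Section OML.
Variable M : COLops.
Hypothesis HM : is_COL M.
Local Notation le := (ole M).
Local Notation c := (oc M).
Local Notation sup := (osup M).
Implicit Types a b d u v x y w s z : ocar M.

Lemma le_refl a : le a a. Proof. destruct HM as (H1&H2&H3&H4&H5&H6&H7&H8); auto. Qed.
Lemma le_antisym a b : le a b -> le b a -> a = b. Proof. destruct HM as (H1&H2&H3&H4&H5&H6&H7&H8); auto. Qed.
Lemma le_trans a b d : le a b -> le b d -> le a d. Proof. destruct HM as (H1&H2&H3&H4&H5&H6&H7&H8); eauto. Qed.
Lemma sup_ub (W : M -> Prop) w : W w -> le w (sup W).
Proof. destruct HM as (H1&H2&H3&H4&H5&H6&H7&H8). intros; apply (proj1 (H4 W)); auto. Qed.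
Lemma sup_le (W : M -> Prop) u : (forall w, W w -> le w u) -> le (sup W) u.
Proof. destruct HM as (H1&H2&H3&H4&H5&H6&H7&H8). intros; apply (proj2 (H4 W)); auto. Qed.
Lemma c_anti a b : le a b -> le (c b) (c a). Proof. destruct HM as (H1&H2&H3&H4&H5&H6&H7&H8); auto. Qed.
Lemma cc a : c (c a) = a. Proof. destruct HM as (H1&H2&H3&H4&H5&H6&H7&H8); auto. Qed.
Lemma c_inj a b : c a = c b -> a = b. Proof. intros H; rewrite <- (cc a), <- (cc b), H; auto. Qed.
Lemma le_c a b : le a b <-> le (c b) (c a).
Proof. split; [apply c_anti|]. intros H; apply c_anti in H; rewrite !cc in H; auto. Qed.
Lemma le_swap a b : le a (c b) -> le b (c a).
Proof. intros H; apply c_anti in H; rewrite cc in H; auto. Qed.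
Lemma sup_ext (S S' : M -> Prop) : (forall z, S z <-> S' z) -> sup S = sup S'.
Proof. intros H; rewrite (pred_ext H); auto. Qed.
Lemma sup_eq (S : M -> Prop) v : S v -> (forall s, S s -> le s v) -> sup S = v.
Proof. intros; apply le_antisym; [apply sup_le|apply sup_ub]; auto. Qed.
Lemma sup_single v : sup (fun z => z = v) = v.
Proof. apply sup_eq; auto. intros s ->; apply le_refl. Qed.
Lemma sup_mono (S S' : M -> Prop) : (forall z, S z -> exists z', S' z' /\ le z z') -> le (sup S) (sup S').
Proof. intros H; apply sup_le; intros w Hw; destruct (H w Hw) as (z'&H1&H2). eapply le_trans; eauto; apply sup_ub; auto. Qed.
Lemma c_sup x (S : M -> Prop) : le x (c (sup S)) <-> forall s, S s -> le x (c s).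
Proof. split.
 - intros H s Hs; apply le_swap; eapply le_trans; [apply sup_ub; eauto|]; apply le_swap; auto.
 - intros H; apply le_swap, sup_le; intros; apply le_swap; auto. Qed.

Lemma join_l a b : le a (ojoin a b). Proof. apply sup_ub; left; auto. Qed.
Lemma join_r a b : le b (ojoin a b). Proof. apply sup_ub; right; auto. Qed.
Lemma join_le a b u : le a u -> le b u -> le (ojoin a b) u.
Proof. intros; apply sup_le; intros w [->| ->]; auto. Qed.
Lemma join_comm a b : ojoin a b = ojoin b a.
Proof. apply le_antisym; apply join_le; (apply join_l || apply join_r). Qed.
Lemma join_eq_r a b : ojoin a b = b <-> le a b.
Proof. split; intros H. rewrite <- H; apply join_l. apply le_antisym; [apply join_le; auto; apply le_refl| apply join_r]. Qed.
Lemma join_mono a b a' b' : le a a' -> le b b' -> le (ojoin a b) (ojoin a' b').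
Proof. intros; apply join_le; eapply le_trans; eauto; (apply join_l || apply join_r). Qed.
Lemma c_meet a b : c (omeet a b) = ojoin (c a) (c b). Proof. unfold omeet; apply cc. Qed.
Lemma c_join a b : c (ojoin a b) = omeet (c a) (c b). Proof. unfold omeet; rewrite !cc; auto. Qed.
Lemma meet_l a b : le (omeet a b) a.
Proof. apply le_c; rewrite c_meet; apply join_l. Qed.
Lemma meet_r a b : le (omeet a b) b.
Proof. apply le_c; rewrite c_meet; apply join_r. Qed.
Lemma meet_ge a b x : le x a -> le x b -> le x (omeet a b).
Proof. intros; apply le_c; rewrite c_meet; apply join_le; apply c_anti; auto. Qed.
Lemma meet_comm a b : omeet a b = omeet b a.
Proof. unfold omeet; rewrite join_comm; auto. Qed.
Lemma meet_mono a b a' b' : le a a' -> le b b' -> le (omeet a b) (omeet a' b').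
Proof. intros; apply meet_ge; eapply le_trans; eauto; (apply meet_l || apply meet_r). Qed.
Lemma top_ge x : le x (otop M). Proof. apply sup_ub; auto. Qed.
Lemma oml a b : le a b -> b = ojoin a (omeet b (c a)).
Proof. destruct HM as (H1&H2&H3&H4&H5&H6&H7&H8); auto. Qed.
Lemma dual_oml a b : le b a -> omeet a (ojoin (c a) b) = b.
Proof. intros H. apply c_inj. rewrite c_meet, c_join, cc.
  rewrite meet_comm. symmetry. pose proof (oml (c_anti H)) as E. rewrite cc in E. exact E. Qed.

Lemma sasaki_le a x : le (sasaki a x) a. Proof. apply meet_l. Qed.
Lemma sasaki_mono a x y : le x y -> le (sasaki a x) (sasaki a y).
Proof. intros; apply meet_mono; [apply le_refl|apply join_mono; auto; apply le_refl]. Qed.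
Lemma sasaki_top a : sasaki a (otop M) = a.
Proof. apply le_antisym; [apply sasaki_le|]. apply meet_ge; [apply le_refl|].
  eapply le_trans; [apply top_ge|apply join_r]. Qed.
Lemma x_le_sasaki a x : le x (ojoin (c a) (sasaki a x)).
Proof. unfold sasaki. rewrite meet_comm. rewrite <- (cc a) at 3.
  rewrite <- (oml (join_l (c a) x)). apply join_r. Qed.
Lemma join_idem_l a y : ojoin a (ojoin a y) = ojoin a y.
Proof. apply le_antisym. apply join_le; [apply join_l|apply le_refl]. apply join_r. Qed.
Lemma sasaki_resid a x b : le (sasaki a x) b <-> le x (ojoin (c a) (omeet a b)).
Proof. split; intros H.
 - eapply le_trans; [apply x_le_sasaki|]. apply join_mono; [apply le_refl|].
   apply meet_ge; auto; apply sasaki_le.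
 - eapply le_trans; [apply (sasaki_mono a H)|]. unfold sasaki. rewrite join_idem_l.
   rewrite dual_oml; [apply meet_r|apply meet_l]. Qed.
Lemma c_sasaki a y : c (sasaki a y) = ojoin (c a) (omeet a (c y)).
Proof. unfold sasaki. rewrite c_meet, c_join, cc; auto. Qed.
Definition adjof (f g : M -> M) := forall x y, le (f x) (c y) <-> le x (c (g y)).
Lemma sasaki_adj a : adjof (sasaki a) (sasaki a).
Proof. intros x y. rewrite c_sasaki. apply sasaki_resid. Qed.
Lemma adj_mono f g x y : adjof f g -> le x y -> le (f x) (f y).
Proof. intros A H. rewrite <- (cc (f y)). apply A. eapply le_trans; eauto. apply A. rewrite cc; apply le_refl. Qed.
Lemma adj_sup f g (W : M -> Prop) : adjof f g -> f (sup W) = sup (img f W).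
Proof. intros A. apply le_antisym.
 - rewrite <- (cc (sup (img f W))). apply A. apply sup_le. intros w Hw. apply A. rewrite cc. apply sup_ub. exists w; auto.
 - apply sup_le. intros z (w&Hw&->). apply (adj_mono A). apply sup_ub; auto. Qed.
Lemma adj_sym f g : adjof f g -> adjof g f.
Proof. intros A x y. split; intros H; apply le_swap; apply A; apply le_swap; auto. Qed.
Lemma adj_unique f g1 g2 : adjof f g1 -> adjof f g2 -> forall y, g1 y = g2 y.
Proof. intros A1 A2 y. apply c_inj. apply le_antisym.
 - apply A2, A1, le_refl.
 - apply A1, A2, le_refl. Qed.
Lemma adj_id : adjof (fun x => x) (fun x => x). Proof. intros x y; reflexivity. Qed.
Lemma adj_comp f1 g1 f2 g2 : adjof f1 g1 -> adjof f2 g2 -> adjof (fun x => f1 (f2 x)) (fun y => g2 (g1 y)).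
Proof. intros A1 A2 x y. rewrite (A1 (f2 x) y). apply A2. Qed.
Lemma adj_supf (F : (M -> M) -> Prop) (G : (M -> M) -> M -> M) :
  (forall f, F f -> adjof f (G f)) ->
  adjof (fun x => sup (fun z => exists f, F f /\ z = f x)) (fun y => sup (fun z => exists f, F f /\ z = G f y)).
Proof. intros A x y. rewrite c_sup. split.
 - intros H s (f&Hf&->). apply A; auto. eapply le_trans; [|apply H]. apply sup_ub; eauto.
 - intros H. apply sup_le. intros z (f&Hf&->). apply A; auto. apply H; eauto. Qed.
End OML.
Section LinS.
Variable M : COLops.
Hypothesis HM : is_COL M.
Local Notation le := (ole M).
Local Notation c := (oc M).
Local Notation sup := (osup M).
Local Notation top := (otop M).
Implicit Types a b u v x y w s z : ocar M.
Implicit Types f g h : LinCar M.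

Lemma lin_ext f g : (forall x, proj1_sig f x = proj1_sig g x) -> f = g.
Proof. destruct f as [f pf], g as [g pg]; simpl; intros H.
 assert (f = g) by (apply functional_extensionality; auto). subst. f_equal. apply proof_irrelevance. Qed.
Lemma liftL_spec (k : M -> M) : has_adjoint k -> proj1_sig (liftL k) = k.
Proof. intros Hh; unfold liftL; destruct excluded_middle_informative; [reflexivity|contradiction]. Qed.
Definition adjL f : M -> M := proj1_sig (constructive_indefinite_description _ (proj2_sig f)).
Lemma adjL_spec f : adjof (proj1_sig f) (adjL f).
Proof. unfold adjL. destruct (constructive_indefinite_description _ _) as [g Hg]; simpl. exact Hg. Qed.
Lemma ha_of (k l : M -> M) : adjof k l -> has_adjoint k.
Proof. intros A; exists l; exact A. Qed.

Lemma adj_jn (A : LinCar M -> Prop) : adjof (fun x => sup (fun z => exists f, A f /\ z = proj1_sig f x))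
   (fun y => sup (fun z => exists f, A f /\ z = adjL f y)).
Proof. intros x y. rewrite (c_sup HM). split.
 - intros H s (f&Hf&->). apply adjL_spec. eapply (le_trans HM); [|apply H]. apply (sup_ub HM); eauto.
 - intros H. apply (sup_le HM). intros z (f&Hf&->). apply adjL_spec. apply H; eauto. Qed.

Lemma jn_fn (A : LinCar M -> Prop) : proj1_sig (Lin_jn A) = fun x => sup (fun z => exists f, A f /\ z = proj1_sig f x).
Proof. apply liftL_spec. eapply ha_of. apply adj_jn. Qed.
Lemma mul_fn f g : proj1_sig (Lin_mul f g) = fun x => proj1_sig f (proj1_sig g x).
Proof. apply liftL_spec. eapply ha_of. apply adj_comp; apply adjL_spec. Qed.
Lemma st_fn f : proj1_sig (Lin_st f) = adjL f.
Proof. apply liftL_spec. apply ha_of with (l := proj1_sig f). apply (adj_sym HM). apply adjL_spec. Qed.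
Definition pi (m : M) : LinCar M := liftL (sasaki m).
Lemma pi_fn m : proj1_sig (pi m) = sasaki m.
Proof. apply liftL_spec. eapply ha_of. apply (sasaki_adj HM). Qed.
Lemma sim_eq f : Lin_sim f = pi (c (proj1_sig f top)). Proof. reflexivity. Qed.
Lemma pi_top m : proj1_sig (pi m) top = m.
Proof. rewrite pi_fn. apply (sasaki_top HM). Qed.
Lemma sim_top f : proj1_sig (Lin_sim f) top = c (proj1_sig f top).
Proof. rewrite sim_eq, pi_top; auto. Qed.
Lemma pi_inj m n : pi m = pi n -> m = n.
Proof. intros H. rewrite <- (pi_top m), <- (pi_top n), H; auto. Qed.
Lemma st_adj f : adjof (proj1_sig f) (proj1_sig (Lin_st f)).
Proof. rewrite st_fn; apply adjL_spec. Qed.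
Lemma st_pi m : Lin_st (pi m) = pi m.
Proof. apply lin_ext; intros y. rewrite st_fn. pose proof (adjL_spec (pi m)) as A.
  rewrite pi_fn in A. rewrite pi_fn. symmetry. apply (adj_unique HM (sasaki_adj HM m) A). Qed.
Lemma bjn_lin f g x : proj1_sig (bjn (K:=Lin M) f g) x = ojoin (proj1_sig f x) (proj1_sig g x).
Proof. unfold bjn; simpl. rewrite jn_fn. apply sup_ext. intros z; split.
  - intros (h&[->| ->]&->); [left|right]; auto.
  - intros [->| ->]; [exists f|exists g]; split; auto; [left|right]; auto. Qed.
Lemma qle_lin f g : qle (K:=Lin M) f g <-> forall x, le (proj1_sig f x) (proj1_sig g x).
Proof. unfold qle. fold (bjn (K:=Lin M) f g). split.
 - intros H x. rewrite <- H, bjn_lin. apply (join_l HM).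
 - intros H. apply lin_ext; intros x. rewrite bjn_lin. apply (join_eq_r HM); auto. Qed.

Lemma lin_IDA : is_IDA (Lin M).
Proof.
 assert (L1 : forall a : Lin M, qle a a). { intros a; apply qle_lin; intros; apply (le_refl HM). }
 assert (L2 : forall a b : Lin M, qle a b -> qle b a -> a = b).
 { intros a b H1 H2; apply lin_ext; intros x; apply (le_antisym HM); [apply qle_lin with (f:=a)|apply qle_lin with (f:=b)]; auto. }
 assert (L3 : forall a b d : Lin M, qle a b -> qle b d -> qle a d).
 { intros a b d H1 H2; apply qle_lin; intros x; eapply (le_trans HM); [apply (proj1 (qle_lin _ _) H1)|apply (proj1 (qle_lin _ _) H2)]. }
 assert (L4 : forall A, is_lub (qle (K:=Lin M)) A (jn (Lin M) A)).
 { intros A; split.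
   - intros w Hw; apply qle_lin; intros x; simpl; rewrite jn_fn. apply (sup_ub HM); eauto.
   - intros u Hu; apply qle_lin; intros x; simpl; rewrite jn_fn. apply (sup_le HM). intros z (f&Hf&->). apply qle_lin; auto. }
 assert (L5 : forall x y z : Lin M, mul _ x (mul _ y z) = mul _ (mul _ x y) z).
 { intros; apply lin_ext; intros; simpl; rewrite !mul_fn; auto. }
 assert (L6 : forall x : Lin M, mul _ (un _) x = x). { intros; apply lin_ext; intros; simpl; rewrite mul_fn; auto. }
 assert (L7 : forall x : Lin M, mul _ x (un _) = x). { intros; apply lin_ext; intros; simpl; rewrite mul_fn; auto. }
 assert (L8 : forall (x : Lin M) A, mul _ x (jn _ A) = jn _ (img (mul _ x) A)).
 { intros x A; apply lin_ext; intros y; simpl. rewrite mul_fn, !jn_fn.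
   rewrite (adj_sup HM _ (adjL_spec x)). apply sup_ext. intros z; split.
   - intros (w&(f&Hf&->)&->). exists (Lin_mul x f); split; [exists f; auto|rewrite mul_fn; auto].
   - intros (h&(f&Hf&->)&->). exists (proj1_sig f y); split; [exists f; auto|rewrite mul_fn; auto]. }
 assert (L9 : forall (x : Lin M) (A : Lin M -> Prop), mul _ (jn _ A) x = jn _ (img (fun q => mul _ q x) A)).
 { intros x A; apply lin_ext; intros y; simpl. rewrite mul_fn, !jn_fn.
   apply sup_ext. intros z; split.
   - intros (f&Hf&->). exists (Lin_mul f x); split; [exists f; auto|rewrite mul_fn; auto].
   - intros (h&(f&Hf&->)&->). exists f; split; auto; rewrite mul_fn; auto. }
 assert (L10 : forall x : Lin M, st _ (st _ x) = x).
 { intros x; apply lin_ext; intros y; simpl. rewrite st_fn.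
   apply (adj_unique HM (adjL_spec (Lin_st x)) (adj_sym HM (st_adj x))). }
 assert (L11 : forall x y : Lin M, st _ (mul _ x y) = mul _ (st _ y) (st _ x)).
 { intros x y; apply lin_ext; intros z; simpl. rewrite st_fn, mul_fn, !st_fn.
   pose proof (adjL_spec (Lin_mul x y)) as A. rewrite mul_fn in A.
   apply (adj_unique HM A (adj_comp (adjL_spec x) (adjL_spec y))). }
 assert (L12 : forall A : Lin M -> Prop, st (Lin M) (jn _ A) = jn _ (img (st _) A)).
 { intros A; apply lin_ext; intros z; simpl. rewrite st_fn, !jn_fn.
   pose proof (adjL_spec (Lin_jn A)) as B. rewrite jn_fn in B.
   rewrite (adj_unique HM B (adj_jn A)). apply sup_ext. intros w; split.
   - intros (f&Hf&->). exists (Lin_st f); split; [exists f; auto|rewrite st_fn; auto].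
   - intros (h&(f&Hf&->)&->). exists f; split; auto; rewrite st_fn; auto. }
 assert (L13 : forall x y : Lin M, sim _ (mul _ x (sim _ (sim _ y))) = sim _ (mul _ x y)).
 { intros x y; simpl. rewrite !sim_eq, !mul_fn. f_equal. f_equal. f_equal.
   rewrite <- sim_eq, sim_top, <- sim_eq, sim_top, (cc HM); auto. }
 assert (L14 : forall A : Lin M -> Prop, sim (Lin M) (jn _ (img (fun q => sim _ (sim _ q)) A)) = sim _ (jn _ A)).
 { intros A; simpl. rewrite !sim_eq, !jn_fn. f_equal. f_equal. apply sup_ext. intros w; split.
   - intros (h&(f&Hf&->)&->). exists f; split; auto. rewrite !sim_top, (cc HM); auto.
   - intros (f&Hf&->). exists (Lin_sim (Lin_sim f)); split; [exists f; auto|]. rewrite !sim_top, (cc HM); auto. }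
 assert (L15 : forall x : Lin M, st _ (sim _ x) = sim _ x).
 { intros x; simpl; rewrite sim_eq; apply st_pi. }
 assert (L16 : forall x y : Lin M, sim _ (sim _ (mul _ (sim _ (sim _ x)) y))
               = sim _ (bjn (sim _ x) (sim _ (bjn (sim _ x) y)))).
 { intros x y. change (sim (Lin M)) with (@Lin_sim M).
   rewrite (sim_eq (Lin_sim _)), (sim_eq (bjn (K:=Lin M) _ _)). f_equal.
   rewrite sim_top, (cc HM). change (mul (Lin M)) with (@Lin_mul M). rewrite mul_fn, !bjn_lin, !sim_top.
   rewrite (sim_eq (Lin_sim x)), pi_fn, sim_top, (cc HM). rewrite bjn_lin, sim_top. unfold sasaki, omeet. reflexivity. }
 exact (conj L1 (conj L2 (conj L3 (conj L4 (conj L5 (conj L6 (conj L7 (conj L8 (conj L9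
   (conj L10 (conj L11 (conj L12 (conj L13 (conj L14 (conj L15 L16))))))))))))))).
Qed.
End LinS.
Lemma col_transport (M N : COLops) (HM : is_COL M) (D : N -> M) (E : M -> N)
  (DE : forall m, D (E m) = m) (ED : forall k, E (D k) = k)
  (Dle : forall a b, ole N a b <-> ole M (D a) (D b))
  (Doc : forall a, D (oc N a) = oc M (D a))
  (Dsup : forall W, D (osup N W) = osup M (img D W)) : is_COL N.
Proof.
 assert (Dinj : forall a b, D a = D b -> a = b). { intros a b H; rewrite <- (ED a), H, ED; auto. }
 assert (Djoin : forall a b, D (ojoin a b) = ojoin (D a) (D b)).
 { intros a b; unfold ojoin; rewrite Dsup; apply sup_ext; intros z; split.
   - intros (w&[->| ->]&->); [left|right]; auto.
   - intros [->| ->]; [exists a|exists b]; split; auto; [left|right]; auto. }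
 assert (Dmeet : forall a b, D (omeet a b) = omeet (D a) (D b)).
 { intros a b; unfold omeet; rewrite Doc, Djoin, !Doc; auto. }
 assert (Dtop : D (otop N) = otop M).
 { unfold otop; rewrite Dsup; apply sup_ext; intros z; split; auto. intros _; exists (E z); auto. }
 destruct HM as (H1&H2&H3&H4&H5&H6&H7&H8).
 split; [|split; [|split; [|split; [|split; [|split; [|split]]]]]].
 - intros a; apply Dle; auto.
 - intros a b Ha Hb; apply Dinj; apply H2; apply Dle; auto.
 - intros a b d Ha Hb; apply Dle; eapply H3; apply Dle; eauto.
 - intros W; split.
   + intros w Hw; apply Dle; rewrite Dsup; apply (H4 (img D W)); exists w; auto.
   + intros u Hu; apply Dle; rewrite Dsup; apply (H4 (img D W)). intros z (w&Hw&->); apply Dle; auto.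
 - intros a b H; apply Dle; rewrite !Doc; apply H5; apply Dle; auto.
 - intros a; apply Dinj; rewrite !Doc; auto.
 - intros a; apply Dinj; rewrite Djoin, Doc, Dtop; auto.
 - intros a b H; apply Dinj; rewrite Djoin, Dmeet, Doc; apply H8; apply Dle; auto.
Qed.
Section PS.
Variable M : COLops.
Hypothesis HM : is_COL M.
Local Notation le := (ole M).
Local Notation c := (oc M).
Local Notation sup := (osup M).
Local Notation top := (otop M).
Variable L : LinCar M -> Prop.
Hypothesis Lid : L (idL M).
Hypothesis Lmul : forall a b, L a -> L b -> L (Lin_mul a b).
Hypothesis Lst : forall a, L a -> L (Lin_st a).
Hypothesis Lpi : forall m, L (pi m).
Implicit Types A B X Y : PCar L.
Implicit Types a b e f g : LinCar M.

Lemma pext A B : (forall d, proj1_sig A d <-> proj1_sig B d) -> A = B.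
Proof. destruct A as [A pA], B as [B pB]; simpl; intros H.
  assert (A = B) by (apply pred_ext; auto). subst. f_equal. apply proof_irrelevance. Qed.
Definition sP A : M := sup (fun z => exists a, proj1_sig A a /\ z = proj1_sig a top).
Definition Psing f : PCar L := P_mk L (fun d => d = f).
Lemma sim_Psing A : P_sim A = Psing (pi (c (sP A))). Proof. reflexivity. Qed.
Lemma inL A a : proj1_sig A a -> L a. Proof. apply (proj2_sig A). Qed.

Lemma mem_mul A B d : proj1_sig (P_mul A B) d <-> exists a b, proj1_sig A a /\ proj1_sig B b /\ d = Lin_mul a b.
Proof. simpl. split; [intros [_ H]; auto|]. intros (a&b&Ha&Hb&->). split; [apply Lmul; eapply inL; eauto|eauto]. Qed.
Lemma mem_st A d : proj1_sig (P_st A) d <-> exists a, proj1_sig A a /\ d = Lin_st a.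
Proof. simpl. split; [intros [_ H]; auto|]. intros (a&Ha&->). split; [apply Lst; eapply inL; eauto|eauto]. Qed.
Lemma mem_un d : proj1_sig (P_un L) d <-> d = idL M.
Proof. simpl. split; [intros [_ H]; auto|]. intros ->; auto. Qed.
Lemma mem_sing f d : L f -> (proj1_sig (Psing f) d <-> d = f).
Proof. intros Hf. simpl. split; [intros [_ H0]; auto|]. intros ->; auto. Qed.
Lemma mem_jn (AA : PCar L -> Prop) d : proj1_sig (P_jn AA) d <-> exists A, AA A /\ proj1_sig A d.
Proof. reflexivity. Qed.

Lemma sP_sing f : L f -> sP (Psing f) = proj1_sig f top.
Proof. intros Hf. unfold sP. rewrite <- (sup_single HM (proj1_sig f top)). apply sup_ext.
  intros z; split. intros (a&Ha&->). apply mem_sing in Ha; auto. subst; auto.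
  intros ->. exists f; split; auto. apply mem_sing; auto. Qed.
Lemma sP_sim A : sP (P_sim A) = c (sP A).
Proof. rewrite sim_Psing, sP_sing, pi_top; auto. Qed.
Lemma mem_sim A d : proj1_sig (P_sim A) d <-> d = pi (c (sP A)).
Proof. rewrite sim_Psing. apply mem_sing; auto. Qed.
Lemma sP_simsim A : sP (P_sim (P_sim A)) = sP A.
Proof. rewrite !sP_sim, (cc HM); auto. Qed.
Lemma sP_jn (AA : PCar L -> Prop) : sP (P_jn AA) = sup (fun z => exists A, AA A /\ z = sP A).
Proof. apply (le_antisym HM).
 - apply (sup_le HM). intros z (a&(A&HA&Ha)&->). eapply (le_trans HM); [|apply (sup_ub HM); exists A; eauto].
   apply (sup_ub HM); eauto.
 - apply (sup_le HM). intros z (A&HA&->). apply (sup_le HM). intros z (a&Ha&->). apply (sup_ub HM).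
   exists a; split; auto. exists A; auto. Qed.
Lemma sP_mul A B : sP (P_mul A B) = sup (fun z => exists a, proj1_sig A a /\ z = proj1_sig a (sP B)).
Proof. apply (le_antisym HM).
 - apply (sup_le HM). intros z (d&Hd&->). apply mem_mul in Hd. destruct Hd as (a&b&Ha&Hb&->).
   rewrite mul_fn. eapply (le_trans HM); [|apply (sup_ub HM); exists a; eauto].
   apply (adj_mono HM (adjL_spec a)). apply (sup_ub HM); eauto.
 - apply (sup_le HM). intros z (a&Ha&->). unfold sP at 1. rewrite (adj_sup HM _ (adjL_spec a)).
   apply (sup_le HM). intros z (w&(b&Hb&->)&->). apply (sup_ub HM). exists (Lin_mul a b). split.
   apply mem_mul; eauto 6. rewrite mul_fn; auto. Qed.
Lemma sP_bjn A B : sP (bjn (K:=Pset L) A B) = ojoin (sP A) (sP B).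
Proof. unfold bjn; simpl. rewrite sP_jn. apply sup_ext. intros z; split.
  - intros (X&[->| ->]&->); [left|right]; auto.
  - intros [->| ->]; [exists A|exists B]; split; auto; [left|right]; auto. Qed.
Lemma Psing_pi_inj m n : Psing (pi m) = Psing (pi n) -> m = n.
Proof. intros H. rewrite <- (pi_top HM m), <- (pi_top HM n), <- !sP_sing, H; auto. Qed.

Lemma lmul_assoc a b e : Lin_mul a (Lin_mul b e) = Lin_mul (Lin_mul a b) e.
Proof. apply (lin_ext); intros; rewrite !mul_fn; auto. Qed.
Lemma lmul_id_l a : Lin_mul (idL M) a = a.
Proof. apply lin_ext; intros; rewrite mul_fn; auto. Qed.
Lemma lmul_id_r a : Lin_mul a (idL M) = a.
Proof. apply lin_ext; intros; rewrite mul_fn; auto. Qed.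
Lemma lst_st a : Lin_st (Lin_st a) = a.
Proof. destruct (lin_IDA HM) as (_&_&_&_&_&_&_&_&_&H&_). apply H. Qed.
Lemma lst_mul a b : Lin_st (Lin_mul a b) = Lin_mul (Lin_st b) (Lin_st a).
Proof. destruct (lin_IDA HM) as (_&_&_&_&_&_&_&_&_&_&H&_). apply H. Qed.

Lemma qle_P A B : qle (K:=Pset L) A B <-> forall d, proj1_sig A d -> proj1_sig B d.
Proof. unfold qle. split.
 - intros H d Hd. rewrite <- H. exists A; split; auto; left; auto.
 - intros H. apply pext. intros d; split. intros (X&[->| ->]&Hx); auto. intros Hd; exists B; split; auto; right; auto. Qed.

Lemma pset_IDA : is_IDA (Pset L).
Proof.
 assert (L1 : forall a : Pset L, qle a a). { intros a; apply qle_P; auto. }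
 assert (L2 : forall a b : Pset L, qle a b -> qle b a -> a = b).
 { intros a b H1 H2; apply pext; intros d; split; [apply qle_P with (A:=a)|apply qle_P with (A:=b)]; auto. }
 assert (L3 : forall a b d : Pset L, qle a b -> qle b d -> qle a d).
 { intros a b d H1 H2; apply qle_P; intros x Hx; apply (proj1 (qle_P _ _) H2), (proj1 (qle_P _ _) H1); auto. }
 assert (L4 : forall AA, is_lub (qle (K:=Pset L)) AA (jn (Pset L) AA)).
 { intros AA; split.
   - intros w Hw; apply qle_P; intros x Hx; exists w; auto.
   - intros u Hu; apply qle_P; intros x (X&HX&Hx). apply (proj1 (qle_P _ _) (Hu X HX)); auto. }
 assert (L5 : forall x y z : Pset L, mul _ x (mul _ y z) = mul _ (mul _ x y) z).
 { intros x y z; apply pext; intros d; simpl mul. rewrite !mem_mul. split.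
   - intros (a&e&Ha&He&->). apply mem_mul in He. destruct He as (b&f&Hb&Hf&->).
     exists (Lin_mul a b), f. rewrite mem_mul. split; eauto 6. split; auto. apply lmul_assoc.
   - intros (e&f&He&Hf&->). apply mem_mul in He. destruct He as (a&b&Ha&Hb&->).
     exists a, (Lin_mul b f). rewrite mem_mul. split; eauto 6. split; eauto 6. symmetry; apply lmul_assoc. }
 assert (L6 : forall x : Pset L, mul _ (un _) x = x).
 { intros x; apply pext; intros d; simpl mul. rewrite mem_mul. split.
   - intros (a&b&Ha&Hb&->). apply mem_un in Ha; subst. rewrite lmul_id_l; auto.
   - intros Hd. exists (idL M), d. rewrite lmul_id_l. split; auto. apply mem_un; auto. }
 assert (L7 : forall x : Pset L, mul _ x (un _) = x).
 { intros x; apply pext; intros d; simpl mul. rewrite mem_mul. split.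
   - intros (a&b&Ha&Hb&->). apply mem_un in Hb; subst. rewrite lmul_id_r; auto.
   - intros Hd. exists d, (idL M). rewrite lmul_id_r. split; auto. split; auto. apply mem_un; auto. }
 assert (L8 : forall (x : Pset L) (AA : Pset L -> Prop), mul _ x (jn _ AA) = jn _ (img (mul _ x) AA)).
 { intros x AA; apply pext; intros d; simpl mul. rewrite mem_mul. simpl jn. rewrite mem_jn. split.
   - intros (a&b&Ha&(X&HX&Hb)&->). exists (P_mul x X). split; [exists X; auto|]. apply mem_mul; eauto.
   - intros (Y&(X&HX&->)&Hd). apply mem_mul in Hd. destruct Hd as (a&b&Ha&Hb&->). exists a, b; split; [|split; [exists X|]]; auto. }
 assert (L9 : forall (x : Pset L) (AA : Pset L -> Prop), mul _ (jn _ AA) x = jn _ (img (fun q => mul _ q x) AA)).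
 { intros x AA; apply pext; intros d; simpl mul. rewrite mem_mul. simpl jn. rewrite mem_jn. split.
   - intros (a&b&(X&HX&Ha)&Hb&->). exists (P_mul X x). split; [exists X; auto|]. apply mem_mul; eauto.
   - intros (Y&(X&HX&->)&Hd). apply mem_mul in Hd. destruct Hd as (a&b&Ha&Hb&->). exists a, b; split; [exists X|split]; auto. }
 assert (L10 : forall x : Pset L, st _ (st _ x) = x).
 { intros x; apply pext; intros d; simpl st. rewrite mem_st. split.
   - intros (a&Ha&->). apply mem_st in Ha. destruct Ha as (b&Hb&->). rewrite lst_st; auto.
   - intros Hd. exists (Lin_st d). rewrite lst_st. split; auto. apply mem_st; eauto. }
 assert (L11 : forall x y : Pset L, st _ (mul _ x y) = mul _ (st _ y) (st _ x)).
 { intros x y; apply pext; intros d; simpl st; simpl mul. rewrite mem_st, mem_mul. split.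
   - intros (e&He&->). apply mem_mul in He. destruct He as (a&b&Ha&Hb&->).
     exists (Lin_st b), (Lin_st a). rewrite !mem_st. split; eauto. split; eauto. apply lst_mul.
   - intros (p&q&Hp&Hq&->). apply mem_st in Hp; apply mem_st in Hq.
     destruct Hp as (b&Hb&->), Hq as (a&Ha&->). exists (Lin_mul a b). rewrite mem_mul. split; eauto 6.
     symmetry; apply lst_mul. }
 assert (L12 : forall AA : Pset L -> Prop, st (Pset L) (jn _ AA) = jn _ (img (st _) AA)).
 { intros AA; apply pext; intros d; simpl st; simpl jn. rewrite mem_st, mem_jn. split.
   - intros (a&(X&HX&Ha)&->). exists (P_st X). split; [exists X; auto|]. apply mem_st; eauto.
   - intros (Y&(X&HX&->)&Hd). apply mem_st in Hd. destruct Hd as (a&Ha&->). exists a; split; [exists X|]; auto. }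
 assert (L13 : forall x y : Pset L, sim _ (mul _ x (sim _ (sim _ y))) = sim _ (mul _ x y)).
 { intros x y; simpl sim; simpl mul. rewrite !sim_Psing. f_equal. f_equal. f_equal.
   rewrite !sP_mul. repeat (rewrite sP_sing by auto; rewrite (pi_top HM)). rewrite (cc HM). auto. }
 assert (L14 : forall AA : Pset L -> Prop, sim (Pset L) (jn _ (img (fun q => sim _ (sim _ q)) AA)) = sim _ (jn _ AA)).
 { intros AA; simpl sim; simpl jn. rewrite !sim_Psing. f_equal. f_equal. f_equal.
   rewrite !sP_jn. apply sup_ext. intros z; split.
   - intros (Y&(X&HX&->)&->). exists X; split; auto. apply sP_simsim.
   - intros (X&HX&->). exists (P_sim (P_sim X)). split; [exists X; auto|]. rewrite sP_simsim; auto. }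
 assert (L15 : forall x : Pset L, st _ (sim _ x) = sim _ x).
 { intros x; apply pext; intros d; simpl st; simpl sim. rewrite mem_st, sim_Psing, mem_sing; auto. split.
   - intros (a&Ha&->). apply mem_sing in Ha; auto. subst. apply st_pi; auto.
   - intros ->. exists (pi (c (sP x))). rewrite st_pi, mem_sing; auto. }
 assert (L16 : forall x y : Pset L, sim _ (sim _ (mul _ (sim _ (sim _ x)) y))
               = sim _ (bjn (sim _ x) (sim _ (bjn (sim _ x) y)))).
 { intros x y. change (sim (Pset L)) with (@P_sim M L). change (mul (Pset L)) with (@P_mul M L).
   rewrite (sim_Psing (P_sim _)), (sim_Psing (bjn (K:=Pset L) _ _)). f_equal. f_equal.
   rewrite sP_sim, (cc HM), !sP_bjn, !sP_sim, sP_bjn, sP_sim, sP_mul.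
   transitivity (sasaki (sP x) (sP y)); [|reflexivity].
   rewrite <- (sup_single HM (sasaki (sP x) (sP y))). apply sup_ext.
   intros z; split.
   - intros (a&Ha&->). apply mem_sim in Ha. subst. rewrite (pi_fn HM), sP_sim, (cc HM); auto.
   - intros ->. exists (pi (c (sP (P_sim x)))). rewrite mem_sim, (pi_fn HM), sP_sim, (cc HM); auto. }
 exact (conj L1 (conj L2 (conj L3 (conj L4 (conj L5 (conj L6 (conj L7 (conj L8 (conj L9
   (conj L10 (conj L11 (conj L12 (conj L13 (conj L14 (conj L15 L16))))))))))))))).
Qed.
Definition Dt (k : TildeCar (Pset L)) : M := sP (proj1_sig k).
Definition Et (m : M) : TildeCar (Pset L) := tmk (K:=Pset L) (Psing (pi (c m))).
Lemma tl_ext (k k' : TildeCar (Pset L)) : proj1_sig k = proj1_sig k' -> k = k'.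
Proof. destruct k as [x px], k' as [y py]; simpl; intros ->; f_equal; apply proof_irrelevance. Qed.
Lemma test_form (k : TildeCar (Pset L)) : proj1_sig k = Psing (pi (Dt k)).
Proof. destruct k as [x [l ->]]. unfold Dt; simpl. rewrite sP_sim. reflexivity. Qed.
Lemma DEt m : Dt (Et m) = m.
Proof. unfold Dt, Et; simpl. rewrite sP_sim, sP_sing, (pi_top HM), (cc HM); auto. Qed.
Lemma EDt k : Et (Dt k) = k.
Proof. apply tl_ext. rewrite (test_form k). unfold Et; simpl. rewrite sim_Psing, sP_sing, (pi_top HM), (cc HM); auto. Qed.
Lemma simsim_P Z : P_sim (P_sim Z) = Psing (pi (sP Z)).
Proof. rewrite (sim_Psing (P_sim Z)), sP_sim, (cc HM); auto. Qed.
Lemma Dt_le k l : t_le k l <-> le (Dt k) (Dt l).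
Proof.
  assert (E : sim (Pset L) (sim (Pset L) (jn (Pset L) (pair (proj1_sig k) (proj1_sig l)))) = Psing (pi (ojoin (Dt k) (Dt l)))).
  { change (sim (Pset L)) with (@P_sim M L). rewrite simsim_P. f_equal. f_equal. apply sP_bjn. }
  unfold t_le. rewrite E. rewrite (test_form l) at 1.
  rewrite <- (join_eq_r HM). split.
  - intros H; apply Psing_pi_inj; auto.
  - intros ->; auto. Qed.
Lemma Dt_oc k : Dt (t_oc k) = c (Dt k).
Proof. unfold Dt, t_oc; simpl. apply sP_sim. Qed.
Lemma Dt_sup W : Dt (t_sup W) = sup (img Dt W).
Proof.
  set (s := sup (img Dt W)).
  assert (HE : is_lub (t_le (K:=Pset L)) W (Et s)).
  { split.
    - intros w Hw; apply Dt_le; rewrite DEt; apply (sup_ub HM); exists w; auto.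
    - intros u Hu; apply Dt_le; rewrite DEt; apply (sup_le HM). intros z (w&Hw&->); apply Dt_le; auto. }
  assert (HS : is_lub (t_le (K:=Pset L)) W (t_sup W)).
  { unfold t_sup. apply epsilon_spec. exists (Et s); auto. }
  apply (le_antisym HM).
  - rewrite <- (DEt s). apply Dt_le. apply (proj2 HS). apply HE.
  - apply (sup_le HM). intros z (w&Hw&->). apply Dt_le. apply (proj1 HS); auto.
Qed.
Lemma tilde_col : is_COL (tilde_ops (Pset L)).
Proof. apply (col_transport HM (N:=tilde_ops (Pset L)) (D:=Dt) (E:=Et)); simpl.
  - apply DEt. - apply EDt. - apply Dt_le. - apply Dt_oc. - apply Dt_sup. Qed.
End PS.


Definition ConjL (M N : COLops) (g : M -> N) (g' : N -> M) (a : LinCar M) : LinCar N :=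
  liftL (fun x => g (proj1_sig a (g' x))).

Lemma iso_sym (M N : COLops) (g : M -> N) (g' : N -> M) : COL_iso g g' -> COL_iso g' g.
Proof. intros (H1&H2&H3&H4). split; [auto|split; [auto|split]].
 - intros m n. rewrite H3, !H2. reflexivity.
 - intros m. rewrite <- (H1 (oc M (g' m))), H4, H2. auto. Qed.

Section Iso.
Variables M N : COLops.
Hypothesis HM : is_COL M.
Hypothesis HN : is_COL N.
Variable g : M -> N.
Variable g' : N -> M.
Hypothesis Hg : COL_iso g g'.

Lemma gg' x : g' (g x) = x. Proof. apply Hg. Qed.
Lemma g'g y : g (g' y) = y. Proof. apply Hg. Qed.
Lemma gle m n : ole M m n <-> ole N (g m) (g n). Proof. apply Hg. Qed.
Lemma goc m : g (oc M m) = oc N (g m). Proof. apply Hg. Qed.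
Lemma gsup W : g (osup M W) = osup N (img g W).
Proof. apply (le_antisym HN).
 - rewrite <- (g'g (osup N (img g W))). apply gle. apply (sup_le HM). intros w Hw.
   apply gle. rewrite g'g. apply (sup_ub HN). exists w; auto.
 - apply (sup_le HN). intros z (w&Hw&->). apply gle. apply (sup_ub HM); auto. Qed.
Lemma gjoin a b : g (ojoin a b) = ojoin (g a) (g b).
Proof. unfold ojoin. rewrite gsup. apply sup_ext. intros z; split.
  - intros (w&[->| ->]&->); [left|right]; auto.
  - intros [->| ->]; [exists a|exists b]; split; auto; [left|right]; auto. Qed.
Lemma gmeet a b : g (omeet a b) = omeet (g a) (g b).
Proof. unfold omeet. rewrite goc, gjoin, !goc; auto. Qed.
Lemma gsasaki m x : g (sasaki m x) = sasaki (g m) (g x).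
Proof. unfold sasaki. rewrite gmeet, gjoin, goc; auto. Qed.
Lemma g'top : g' (otop N) = otop M.
Proof. apply (le_antisym HM); [apply (top_ge HM)|]. apply gle. rewrite g'g. apply (top_ge HN). Qed.
Lemma g'oc y : g' (oc N y) = oc M (g' y). Proof. apply (iso_sym Hg). Qed.
Lemma le_g_r u v : ole N u (g v) <-> ole M (g' u) v.
Proof. rewrite (gle (g' u) v), g'g. reflexivity. Qed.
Lemma conj_adj a : adjof (fun x => g (proj1_sig a (g' x))) (fun y => g (adjL a (g' y))).
Proof. intros x y. cbv beta. rewrite <- (g'g (oc N y)).
  rewrite <- (gle (proj1_sig a (g' x)) (g' (oc N y))). rewrite g'oc.
  rewrite (adjL_spec a (g' x) (g' y)). rewrite <- goc. rewrite le_g_r. reflexivity. Qed.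
Lemma conj_fn a : proj1_sig (ConjL g g' a) = fun x => g (proj1_sig a (g' x)).
Proof. apply liftL_spec. eapply ha_of. apply conj_adj. Qed.
Lemma conj_pi m : ConjL g g' (pi m) = pi (g m).
Proof. apply lin_ext; intros x. rewrite conj_fn, (pi_fn HM), (pi_fn HN), gsasaki, g'g; auto. Qed.
Lemma conj_hom : IDA_hom (K:=Lin M) (L:=Lin N) (ConjL g g').
Proof. split; [|split; [|split; [|split]]].
 - intros A. apply lin_ext; intros x. simpl. rewrite conj_fn, (jn_fn HM), (jn_fn HN), gsup.
   apply sup_ext. intros z; split.
   + intros (w&(f&Hf&->)&->). exists (ConjL g g' f). split; [exists f; auto|]. rewrite conj_fn; auto.
   + intros (h&(f&Hf&->)&->). exists (proj1_sig f (g' x)). split; [exists f; auto|]. rewrite conj_fn; auto.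
 - intros a b. apply lin_ext; intros x. simpl. rewrite conj_fn, !mul_fn, !conj_fn, gg'; auto.
 - intros a. apply lin_ext; intros y. simpl. rewrite conj_fn, !(st_fn HM), (st_fn HN).
   pose proof (adjL_spec (ConjL g g' a)) as A. rewrite conj_fn in A.
   apply (adj_unique HN (conj_adj a) A).
 - apply lin_ext; intros x. simpl. rewrite conj_fn. apply g'g.
 - intros a. apply lin_ext; intros x. simpl. rewrite !sim_eq, conj_pi, conj_fn, g'top, goc; auto. Qed.
Lemma conj_mem (A : LinCar M -> Prop) c : conjset g g' A c <-> exists a, A a /\ c = ConjL g g' a.
Proof. split.
 - intros (a&Ha&Hc). exists a; split; auto. apply lin_ext; intros x; rewrite conj_fn, Hc; auto.
 - intros (a&Ha&->). exists a; split; auto. rewrite conj_fn; auto. Qed.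
Lemma conj_inj a b : ConjL g g' a = ConjL g g' b -> a = b.
Proof. intros H. apply lin_ext; intros x. assert (E := f_equal (fun f => proj1_sig f (g x)) H).
  simpl in E. rewrite !conj_fn, !gg' in E. rewrite <- (gg' (proj1_sig a x)), E, gg'; auto. Qed.
Variable T : Tfun.
Arguments T : clear implicits.
Hypothesis Tf : forall (K L : IDAops) (f : K -> L), is_IDA K -> is_IDA L -> IDA_hom f ->
     forall x, T K x -> T L (f x).
Lemma conj_T a : T (Lin M) a -> T (Lin N) (ConjL g g' a).
Proof. apply (Tf (lin_IDA HM) (lin_IDA HN) conj_hom). Qed.
End Iso.

Lemma conj_conj (M N : COLops) (HM : is_COL M) (HN : is_COL N) (g : M -> N) (g' : N -> M)
  (Hg : COL_iso g g') b : ConjL g g' (ConjL g' g b) = b.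
Proof. apply lin_ext; intros x. rewrite (conj_fn Hg), (conj_fn (iso_sym Hg)).
  rewrite (g'g Hg), (g'g Hg). auto. Qed.

Definition closedL (M : COLops) (L : LinCar M -> Prop) : Prop :=
  L (idL M) /\ (forall a b, L a -> L b -> L (Lin_mul a b)) /\ (forall a, L a -> L (Lin_st a)) /\
  (forall m, L (pi m)).

Lemma sim_pi_c (M : COLops) (HM : is_COL M) (m : M) : Lin_sim (pi (oc M m)) = pi m.
Proof. rewrite sim_eq, (pi_top HM), (cc HM); auto. Qed.

Lemma T_closed (T : Tfun) (T1 : forall K, is_IDA K ->
     (forall k, T K (sim K k)) /\ T K (un K) /\
     (forall x y, T K x -> T K y -> T K (mul K x y)) /\
     (forall x, T K x -> T K (st K x))) (M : COLops) (HM : is_COL M) : closedL (T (Lin M)).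
Proof. destruct (T1 (Lin M) (lin_IDA HM)) as (Ts&Tu&Tm&Tst). split; [|split; [|split]]; auto.
  intros m. rewrite <- (sim_pi_c HM m). apply Ts. Qed.

Definition Fmap (T : Tfun) (M N : COLops) (g : M -> N) (g' : N -> M) (A : Pset (T (Lin M))) : Pset (T (Lin N)) :=
  P_mk (T (Lin N)) (conjset g g' (proj1_sig A)).



Section FM.
Variables M N : COLops.
Hypothesis HM : is_COL M.
Hypothesis HN : is_COL N.
Variable g : M -> N.
Variable g' : N -> M.
Hypothesis Hg : COL_iso g g'.
Variable T : Tfun.
Arguments T : clear implicits.
Hypothesis Tf : forall (K L : IDAops) (f : K -> L), is_IDA K -> is_IDA L -> IDA_hom f ->
     forall x, T K x -> T L (f x).
Hypothesis CM : closedL (T (Lin M)).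
Hypothesis CN : closedL (T (Lin N)).
Local Notation F := (@Fmap T M N g g').

Lemma Fmem (A : Pset (T (Lin M))) c : proj1_sig (F A) c <-> exists a, proj1_sig A a /\ c = ConjL g g' a.
Proof. simpl. rewrite (conj_mem Hg). split; [intros [_ H]; auto|].
  intros (a&Ha&->). split; eauto. apply (conj_T HM HN Hg Tf). apply (proj2_sig A); auto. Qed.
Lemma Fmap_val (A : Pset (T (Lin M))) : proj1_sig (F A) = conjset g g' (proj1_sig A).
Proof. apply pred_ext; intros c. rewrite Fmem, (conj_mem Hg). reflexivity. Qed.
Lemma sP_F (A : Pset (T (Lin M))) : sP (F A) = g (sP A).
Proof. unfold sP. rewrite (gsup HM HN Hg). apply sup_ext. intros z; split.
  - intros (d&Hd&->). apply Fmem in Hd. destruct Hd as (a&Ha&->). exists (proj1_sig a (otop M)).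
    split; [exists a; auto|]. rewrite (conj_fn Hg), (g'top HM HN Hg); auto.
  - intros (w&(a&Ha&->)&->). exists (ConjL g g' a). split; [apply Fmem; eauto|].
    rewrite (conj_fn Hg), (g'top HM HN Hg); auto. Qed.

Lemma Fmap_hom : IDA_hom (K:=Pset (T (Lin M))) (L:=Pset (T (Lin N))) (F).
Proof.
  destruct (conj_hom HM HN Hg) as (Hj&Hm&Hs&Hu&Hsim).
  destruct CM as (Mid&Mmul&Mst&Mpi). destruct CN as (Nid&Nmul&Nst&Npi).
  split; [|split; [|split; [|split]]].
  - intros AA. apply pext; intros c. rewrite Fmem. change (jn (Pset (T (Lin N)))) with (@P_jn N (T (Lin N))).
    rewrite mem_jn. split.
    + intros (a&(X&HX&Ha)&->). exists (F X). split; [exists X; auto|]. apply Fmem; eauto.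
    + intros (Y&(X&HX&->)&Hc). apply Fmem in Hc. destruct Hc as (a&Ha&->). exists a; split; auto. exists X; auto.
  - intros A B. apply pext; intros c. rewrite Fmem. change (mul (Pset (T (Lin N)))) with (@P_mul N (T (Lin N))).
    rewrite (mem_mul Nmul). split.
    + intros (d&Hd&->). apply (mem_mul Mmul) in Hd. destruct Hd as (a&b&Ha&Hb&->).
      exists (ConjL g g' a), (ConjL g g' b). split; [apply Fmem; eauto|split; [apply Fmem; eauto|]]. exact (Hm a b).
    + intros (p&q&Hp&Hq&->). apply Fmem in Hp; apply Fmem in Hq. destruct Hp as (a&Ha&->), Hq as (b&Hb&->).
      exists (Lin_mul a b). split; [apply (mem_mul Mmul); eauto 6|]. symmetry; exact (Hm a b).
  - intros A. apply pext; intros c. rewrite Fmem. change (st (Pset (T (Lin N)))) with (@P_st N (T (Lin N))).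
    rewrite (mem_st Nst). split.
    + intros (d&Hd&->). apply (mem_st Mst) in Hd. destruct Hd as (a&Ha&->).
      exists (ConjL g g' a). split; [apply Fmem; eauto|]. exact (Hs a).
    + intros (p&Hp&->). apply Fmem in Hp. destruct Hp as (a&Ha&->).
      exists (Lin_st a). split; [apply (mem_st Mst); eauto|]. symmetry; exact (Hs a).
  - apply pext; intros c. rewrite Fmem. change (un (Pset (T (Lin N)))) with (@P_un N (T (Lin N))).
    rewrite (mem_un Nid). split.
    + intros (d&Hd&->). apply (mem_un Mid) in Hd. subst. exact Hu.
    + intros ->. exists (idL M). split; [apply (mem_un Mid); auto|]. symmetry; exact Hu.
  - intros A. apply pext; intros c. rewrite Fmem. change (sim (Pset (T (Lin N)))) with (@P_sim N (T (Lin N))).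
    rewrite (mem_sim Npi), sP_F. split.
    + intros (d&Hd&->). apply (mem_sim Mpi) in Hd. subst. rewrite (conj_pi HM HN Hg), (goc Hg); auto.
    + intros ->. exists (pi (oc M (sP A))). split; [apply (mem_sim Mpi); auto|].
      rewrite (conj_pi HM HN Hg), (goc Hg); auto.
Qed.
Lemma Fmap_inj (A B : Pset (T (Lin M))) : F A = F B -> A = B.
Proof. intros H. apply pext; intros a; split; intros Ha.
  - assert (E : proj1_sig (F B) (ConjL g g' a)) by (rewrite <- H; apply Fmem; eauto).
    apply Fmem in E. destruct E as (b&Hb&E). apply (conj_inj Hg) in E. subst; auto.
  - assert (E : proj1_sig (F A) (ConjL g g' a)) by (rewrite H; apply Fmem; eauto).
    apply Fmem in E. destruct E as (b&Hb&E). apply (conj_inj Hg) in E. subst; auto. Qed.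
End FM.

Unset Implicit Arguments.
Theorem theorem5p5 (T : Tfun) (HT : T_axioms T) :
  (forall M : COLops, is_COL M -> is_TODA T (Gamma T M)) /\
  (forall (M N : COLops) (g : M -> N) (g' : N -> M),
     is_COL M -> is_COL N -> COL_iso g g' ->
     exists F : Gamma T M -> Gamma T N,
       (forall A, proj1_sig (F A) = conjset g g' (proj1_sig A)) /\ TODA_hom F) /\
  (forall (M : COLops) (A : Gamma T M), is_COL M ->
     conjset (fun x : M => x) (fun x : M => x) (proj1_sig A) = proj1_sig A) /\
  (forall (M N P : COLops) (g : M -> N) (g' : N -> M) (h : N -> P) (h' : P -> N)
     (A : Gamma T M),
     is_COL M -> is_COL N -> is_COL P -> COL_iso g g' -> COL_iso h h' ->
     conjset (fun x => h (g x)) (fun z => g' (h' z)) (proj1_sig A)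
     = conjset h h' (conjset g g' (proj1_sig A))).
Proof.
  destruct HT as (T1&Tf&_&T3).
  split; [|split; [|split]].
  - intros M HM. pose proof (T_closed T1 HM) as CM. destruct CM as (Mid&Mmul&Mst&Mpi).
    destruct (T3 M HM) as (psi&Hpsi&Smap&Sinj&Ssurj&_).
    assert (Hmem : forall f c, T (Lin M) f -> proj1_sig (psi f) c <-> c = f).
    { intros f c Hf. rewrite (Hpsi f Hf). reflexivity. }
    unfold is_TODA, Gamma.
    split; [apply (pset_IDA HM); auto|split; [apply (tilde_col HM); auto|split; [|split]]].
    + intros A HA Hmul Hst Hjn x.
      set (X := fun Y : Pset (T (Lin M)) => exists f, proj1_sig x f /\ Y = psi f).
      assert (Ex : x = jn (Pset (T (Lin M))) X).
      { apply pext; intros c. simpl jn. rewrite mem_jn. split.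
        - intros Hc. exists (psi c). split; [exists c; auto|]. apply Hmem; auto. apply (proj2_sig x); auto.
        - intros (Y&(f&Hf&->)&Hc). apply Hmem in Hc; [subst; auto|]. apply (proj2_sig x); auto. }
      rewrite Ex. apply Hjn. intros Y (f&Hf&->). apply HA. apply Smap. apply (proj2_sig x); auto.
    + assert (key : forall S S' : Pset (T (Lin M)) -> Prop,
                (forall x, S x -> T _ x) -> (forall x, S' x -> T _ x) ->
                jn _ S = jn _ S' -> forall x, S x -> S' x).
      { intros S S' HS HS' H x Hx. destruct (Ssurj x (HS x Hx)) as (f&Hf&<-).
        assert (Hin : proj1_sig (jn (Pset (T (Lin M))) S) f) by (exists (psi f); split; auto; apply Hmem; auto).
        rewrite H in Hin. destruct Hin as (Y&HY&Hy). destruct (Ssurj Y (HS' Y HY)) as (h&Hh&<-).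
        apply Hmem in Hy; auto. subst; auto. }
      intros S S' HS HS'. split.
      * intros H x; split; [apply key; auto|apply key; auto].
      * intros H. rewrite (pred_ext H). reflexivity.
    + intros s t Hs Ht. split; [intros ->; intros w; reflexivity|]. intros He.
      destruct (Ssurj s Hs) as (f&Hf&<-). destruct (Ssurj t Ht) as (h&Hh&<-).
      assert (Hsing : forall (k : LinCar M) (W : Pset (T (Lin M))), T (Lin M) k ->
                 sP (P_mul (psi k) W) = proj1_sig k (sP W)).
      { intros k W Hk. rewrite (sP_mul HM Mmul). rewrite <- (sup_single HM (proj1_sig k (sP W))).
        apply sup_ext. intros z; split.
        - intros (a&Ha&->). apply Hmem in Ha; auto. subst; auto.
        - intros ->. exists k; split; auto. apply Hmem; auto. }
      f_equal. apply lin_ext; intros m.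
      assert (E : P_sim (P_sim (P_mul (psi f) (proj1_sig (Et (T (Lin M)) m))))
                = P_sim (P_sim (P_mul (psi h) (proj1_sig (Et (T (Lin M)) m))))) by exact (He (Et _ m)).
      rewrite !(simsim_P HM Mpi) in E. apply (Psing_pi_inj HM Mpi) in E.
      rewrite !Hsing in E; auto. change (sP (proj1_sig (Et (T (Lin M)) m))) with (Dt (Et (T (Lin M)) m)) in E.
      rewrite (DEt HM Mpi) in E. exact E.
  - intros M N g g' HM HN Hg. exists (@Fmap T M N g g'). split.
    + intros A. apply (Fmap_val HM HN Hg Tf).
    + split; [apply (Fmap_hom HM HN Hg Tf); apply (T_closed T1); auto|split].
      * intros A B. apply (Fmap_inj HM HN Hg Tf).
      * intros B. exists (@Fmap T N M g' g B). apply pext; intros c.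
        rewrite (Fmem HM HN Hg Tf). split.
        -- intros (a&Ha&->). apply (Fmem HN HM (iso_sym Hg) Tf) in Ha. destruct Ha as (b&Hb&->).
           rewrite (conj_conj HM HN Hg). auto.
        -- intros Hc. exists (ConjL g' g c). split; [apply (Fmem HN HM (iso_sym Hg) Tf); eauto|].
           rewrite (conj_conj HM HN Hg); auto.
  - intros M A HM. apply pred_ext; intros c; split.
    + intros (a&Ha&Hc). replace c with a; auto. apply lin_ext; intros x. rewrite Hc. reflexivity.
    + intros Hc. exists c; split; auto.
  - intros M N P g g' h h' A HM HN HP Hg Hh. apply pred_ext; intros c; split.
    + intros (a&Ha&Hc). exists (ConjL g g' a). split.
      * exists a; split; auto. rewrite (conj_fn Hg). reflexivity.
      * rewrite Hc, (conj_fn Hg). reflexivity.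
    + intros (b&(a&Ha&Hb)&Hc). exists a; split; auto. rewrite Hc, Hb. reflexivity.
Qed.
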